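(* There exists a constant $C>0$ such that for all integers $n\ge2$, $g\ge1$ with $\theta:=g/n\ge x^{-2/3}$, where $x:=n+g$, \[\Big|\beta(n,g)-e^{-f'(\theta)}-\frac{e^{-f'(\theta)}}{n}\Big(\frac{f''(\theta)}{2}-j'(\theta)\Big)\Big|\le C\,x^{-4/3}.\]
   Context: Define $\lambda:[0,\infty)\to(0,1/4]$ by $\lambda(0)=1/4$ and, for $\theta>0$, $\lambda(\theta)$ is the unique $\lambda\in(0,1/4)$ with $-1+\frac{\operatorname{artanh}(\sqrt{1-4\lambda})}{\sqrt{1-4\lambda}}=\theta$. For $\theta>0$ set $f(\theta)=-\ln\lambda(\theta)-2\theta-\theta\ln(1-4\lambda(\theta))$ and $j(\theta)=-\tfrac12\ln(1-4(\theta+1)\lambda(\theta))+\tfrac12\ln 2$. For integers $n\ge1$, $g\ge1$ let \[\Omega(n,g)=\frac{\sqrt g\,g^g}{\sqrt{2\pi}\,e^g\,g!}\,n^{2g-2}\exp\!\Big(nf\big(\tfrac gn\big)+j\big(\tfrac gn\big)\Big),\qquad \Omega(n,0)=\frac{4^n n^{-3/2}}{\sqrt{2\pi}},\] and for $n\ge2$, $g\ge1$ let $\beta(n,g)=n^2\frac{\Omega(n,g-1)}{\Omega(n,g)}$. *)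

(* Defs.v *)
From Stdlib Require Import Reals ClassicalEpsilon.
From Coquelicot Require Import Coquelicot.
Open Scope R_scope.

Definition artanh (y : R) : R := / 2 * ln ((1 + y) / (1 - y)).

Definition lam_spec (theta l : R) : Prop :=
  0 < l < / 4 /\
  -1 + artanh (sqrt (1 - 4 * l)) / sqrt (1 - 4 * l) = theta.

(* lambda(theta): lambda(0) = 1/4; for theta > 0 the (unique) solution of
   lam_spec in (0,1/4).  Values for theta < 0 are irrelevant (set to 1/4). *)
Definition lam (theta : R) : R :=
  match Rlt_dec 0 theta with
  | left _ => epsilon (inhabits (/ 4)) (lam_spec theta)
  | right _ => / 4
  end.

Definition f_th (theta : R) : R :=
  - ln (lam theta) - 2 * theta - theta * ln (1 - 4 * lam theta).

Definition j_th (theta : R) : R :=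
  - / 2 * ln (1 - 4 * (theta + 1) * lam theta) + / 2 * ln 2.

Definition Omega (n g : nat) : R :=
  match g with
  | O => 4 ^ n * Rpower (INR n) (- (3 / 2)) / sqrt (2 * PI)
  | S _ =>
      let th := INR g / INR n in
      sqrt (INR g) * INR g ^ g / (sqrt (2 * PI) * exp (INR g) * INR (Factorial.fact g))
      * INR n ^ (2 * g - 2) * exp (INR n * f_th th + j_th th)
  end.

Definition beta (n g : nat) : R := INR n ^ 2 * Omega n (g - 1) / Omega n g.

(* Main.v *)
Require Import Defs.
From Stdlib Require Import Reals Lra Lia Ranalysis5 ClassicalEpsilon.
From Coquelicot Require Import Coquelicot.
Open Scope R_scope.

Ltac nz := match goal with |- ?a <> 0 => first [apply Rgt_not_eq; unfold Rgt; (lra||nra) | apply Rlt_not_eq; (lra||nra)] end.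
Ltac sides := repeat match goal with |- _ /\ _ => split end; try nz; try lra.

Lemma deriv_cont (f df : R -> R) x : is_derive f x (df x) -> continuity_pt f x.
Proof.
  intro H. apply continuity_pt_filterlim. apply (@ex_derive_continuous R_AbsRing R_NormedModule f x).
  exists (df x). exact H.
Qed.

Lemma mvt_aux (f df : R -> R) a b : a < b ->
  (forall t, a <= t <= b -> is_derive f t (df t)) ->
  exists c, a <= c <= b /\ f b - f a = df c * (b - a).
Proof.
  intros Hab Hd.
  destruct (MVT_gen f a b df) as [c [Hc Hc2]].
  - intros x Hx. apply Hd. rewrite Rmin_left in Hx by lra. rewrite Rmax_right in Hx by lra. lra.
  - intros x Hx. rewrite Rmin_left in Hx by lra. rewrite Rmax_right in Hx by lra.
    apply (deriv_cont f df). apply Hd. lra.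
  - exists c. rewrite Rmin_left in Hc by lra. rewrite Rmax_right in Hc by lra. split; auto.
Qed.

Lemma mono_le (f df : R -> R) a b : a <= b ->
  (forall t, a <= t <= b -> is_derive f t (df t)) ->
  (forall t, a <= t <= b -> 0 <= df t) -> f a <= f b.
Proof.
  intros Hab Hd Hp. destruct (Req_dec a b) as [->|Hne]; [lra|].
  destruct (mvt_aux f df a b) as [c [Hc E]]; try lra; auto.
  assert (0 <= df c * (b - a)) by (apply Rmult_le_pos; [apply Hp; lra| lra]). lra.
Qed.

Lemma mono_lt (f df : R -> R) a b : a < b ->
  (forall t, a <= t <= b -> is_derive f t (df t)) ->
  (forall t, a <= t <= b -> 0 < df t) -> f a < f b.
Proof.
  intros Hab Hd Hp.
  destruct (mvt_aux f df a b) as [c [Hc E]]; try lra; auto.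
  assert (0 < df c * (b - a)) by (apply Rmult_lt_0_compat; [apply Hp; lra| lra]). lra.
Qed.

Lemma lip (f df : R -> R) a b M : a <= b ->
  (forall t, a <= t <= b -> is_derive f t (df t)) ->
  (forall t, a <= t <= b -> Rabs (df t) <= M) -> Rabs (f b - f a) <= M * (b - a).
Proof.
  intros Hab Hd Hp. destruct (Req_dec a b) as [->|Hne].
  { replace (f b - f b) with 0 by ring. rewrite Rabs_R0. lra. }
  destruct (mvt_aux f df a b) as [c [Hc E]]; try lra; auto.
  rewrite E, Rabs_mult, (Rabs_right (b - a)) by lra.
  apply Rmult_le_compat_r; [lra| apply Hp; lra].
Qed.

Lemma artanh_deriv t : -1 < t < 1 -> is_derive artanh t (/ (1 - t ^ 2)).
Proof.
  intro Ht. unfold artanh. auto_derive.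
  - split; [lra|split; auto]. apply Rdiv_lt_0_compat; lra.
  - field. sides.
Qed.

Lemma artanh_0 : artanh 0 = 0.
Proof. unfold artanh. replace ((1+0)/(1-0)) with 1 by field. rewrite ln_1. ring. Qed.

Lemma I1 s : 0 <= s < 1 -> s + s ^ 3 / 3 <= artanh s.
Proof.
  intro Hs.
  assert (H := mono_le (fun t => artanh t - t - t ^ 3 / 3) (fun t => / (1 - t ^ 2) - 1 - t ^ 2) 0 s).
  cbv beta in H. rewrite artanh_0 in H.
  cut (0 - 0 - 0 ^ 3 / 3 <= artanh s - s - s ^ 3 / 3); [simpl; lra|]. apply H.
  - lra.
  - intros t Ht. unfold artanh. auto_derive.
    + split; [lra|split; auto]. apply Rdiv_lt_0_compat; lra.
    + field. sides.
  - intros t Ht. assert (0 < 1 - t^2) by nra.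
    replace (/ (1 - t ^ 2) - 1 - t ^ 2) with (t^4 / (1 - t^2)) by (field; lra).
    apply Rdiv_le_0_compat; nra.
Qed.

Lemma I2 s : 0 <= s < 1 -> artanh s * (1 - s ^ 2) <= s - 2 * s ^ 3 / 3.
Proof.
  intro Hs.
  assert (H := mono_le (fun t => t - 2 * t ^ 3 / 3 - artanh t * (1 - t ^ 2))
     (fun t => 2 * t * (artanh t - t)) 0 s).
  cbv beta in H. rewrite artanh_0 in H.
  cut (0 - 2 * 0 ^ 3 / 3 - 0 * (1 - 0 ^ 2) <= s - 2 * s ^ 3 / 3 - artanh s * (1 - s ^ 2)); [simpl; lra|]. apply H.
  - lra.
  - intros t Ht. unfold artanh. auto_derive.
    + split; [lra|split; auto]. apply Rdiv_lt_0_compat; lra.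
    + unfold Rdiv, Rminus. field. sides.
  - intros t Ht. assert (H1 := I1 t ltac:(lra)).
    apply Rmult_le_pos; [lra|]. assert (0 <= t^3/3) by (apply Rdiv_le_0_compat; [apply pow_le|]; lra). lra.
Qed.

Lemma I3 s : 0 <= s < 1 -> artanh s <= s + s ^ 3 / (3 * (1 - s ^ 2)).
Proof.
  intro Hs.
  assert (H := mono_le (fun t => t + t ^ 3 / (3 * (1 - t ^ 2)) - artanh t)
     (fun t => 2 * t ^ 4 / (3 * (1 - t ^ 2) ^ 2)) 0 s).
  cbv beta in H. rewrite artanh_0 in H.
  cut (0 + 0 ^ 3 / (3 * (1 - 0 ^ 2)) - 0 <= s + s ^ 3 / (3 * (1 - s ^ 2)) - artanh s); [simpl; lra|]. apply H.
  - lra.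
  - intros t Ht. assert (0 < 1 - t^2) by nra. unfold artanh. auto_derive.
    + split; [nz|]. split; [lra|split; auto]. apply Rdiv_lt_0_compat; lra.
    + field. sides.
  - intros t Ht. assert (0 < 1 - t^2) by nra. apply Rdiv_le_0_compat.
    + assert (0 <= t^4) by (apply pow_le; lra). lra.
    + assert (0 < (1 - t^2)^2) by (apply pow_lt; lra). lra.
Qed.

Lemma artanh_nonneg s : 0 <= s < 1 -> 0 <= artanh s.
Proof. intro Hs. assert (H := I1 s Hs). assert (0 <= s^3) by (apply pow_le; lra). lra. Qed.

Lemma ln_le_4 z : 1 <= z -> ln z <= 4 * sqrt (sqrt z).
Proof.
  intro Hz. set (w := sqrt (sqrt z)).
  assert (Hw : 0 < w) by (unfold w; apply sqrt_lt_R0, sqrt_lt_R0; lra).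
  assert (Hz4 : z = w ^ 4).
  { unfold w. replace 4%nat with (2 * 2)%nat by reflexivity. rewrite pow_mult.
    rewrite !pow2_sqrt; try lra. apply sqrt_pos. }
  rewrite Hz4. rewrite ln_pow by lra.
  assert (H := exp_ineq1_le (ln w)). rewrite exp_ln in H by lra. simpl. lra.
Qed.

Lemma I4 s : 0 <= s < 1 -> artanh s ^ 4 * (1 - s ^ 2) <= 64.
Proof.
  intro Hs. set (z := (1 + s) / (1 - s)).
  assert (Hz : 1 <= z) by (unfold z; apply (Rmult_le_reg_r (1 - s)); [lra|]; field_simplify; lra).
  assert (HA : 0 <= artanh s) by (apply artanh_nonneg; lra).
  assert (HA2 : artanh s <= 2 * sqrt (sqrt z)).
  { unfold artanh. fold z. assert (H := ln_le_4 z Hz). lra. }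
  assert (Hw4 : sqrt (sqrt z) ^ 4 = z).
  { replace 4%nat with (2 * 2)%nat by reflexivity. rewrite pow_mult.
    rewrite !pow2_sqrt; try lra. apply sqrt_pos. }
  assert (artanh s ^ 4 <= 16 * z).
  { rewrite <- Hw4. replace (16 * sqrt (sqrt z) ^ 4) with ((2 * sqrt (sqrt z)) ^ 4) by ring.
    apply pow_incr. lra. }
  assert (z * (1 - s^2) = (1 + s)^2) by (unfold z; field; lra).
  assert (0 <= 1 - s^2) by nra.
  apply Rle_trans with (16 * z * (1 - s^2)).
  - apply Rmult_le_compat_r; lra.
  - replace (16 * z * (1 - s^2)) with (16 * (z * (1 - s^2))) by ring. nra.
Qed.

Definition Tf (s : R) : R := -1 + artanh s / s.
Definition Qf (s : R) : R := / (1 - s ^ 2) - artanh s / s.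
Definition Qp (s : R) : R := 2 * s / (1 - s ^ 2) ^ 2 - / (s * (1 - s ^ 2)) + artanh s / s ^ 2.

Lemma Tf_deriv s : 0 < s < 1 -> is_derive Tf s (Qf s / s).
Proof.
  intro Hs. unfold Tf, Qf, artanh. auto_derive.
  - split; [lra|]. split; [apply Rdiv_lt_0_compat; lra|]. split; auto; lra.
  - unfold Rdiv, Rminus. field. sides.
Qed.

Lemma Qf_deriv s : 0 < s < 1 -> is_derive Qf s (Qp s).
Proof.
  intro Hs. assert (Hu0 : 0 < 1 - s^2) by nra. unfold Qp, Qf, artanh. auto_derive.
  - split; [nz|]. split; [lra|]. split; [apply Rdiv_lt_0_compat; lra|]. split; auto; lra.
  - unfold Rdiv, Rminus. field. sides.
Qed.

Lemma Qf_low s : 0 < s < 1 -> 2 / 3 * s ^ 2 / (1 - s ^ 2) <= Qf s.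
Proof.
  intro Hs. assert (Hu0 : 0 < 1 - s^2) by nra. assert (H := I2 s ltac:(lra)).
  unfold Qf. apply (Rmult_le_reg_r (s * (1 - s^2))). nra.
  replace ((/ (1 - s ^ 2) - artanh s / s) * (s * (1 - s ^ 2))) with (s - artanh s * (1 - s^2)) by (field; sides).
  replace (2 / 3 * s ^ 2 / (1 - s ^ 2) * (s * (1 - s ^ 2))) with (2 / 3 * s ^ 3) by (field; sides).
  lra.
Qed.

Lemma Qf_pos s : 0 < s < 1 -> 0 < Qf s.
Proof.
  intro Hs. assert (Hu0 : 0 < 1 - s^2) by nra. assert (HH := Qf_low s Hs).
  assert (0 < 2 / 3 * s ^ 2 / (1 - s ^ 2)) by (apply Rdiv_lt_0_compat; nra). lra.
Qed.

Lemma Tf_low s : 0 < s < 1 -> s ^ 2 / 3 <= Tf s.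
Proof.
  intro Hs. assert (H := I1 s ltac:(lra)). unfold Tf.
  apply (Rmult_le_reg_r s). lra.
  replace ((-1 + artanh s / s) * s) with (artanh s - s) by (field; lra).
  replace (s ^ 2 / 3 * s) with (s^3/3) by (field; lra). lra.
Qed.

Lemma Tf_up s : 0 < s < 1 -> Tf s <= s ^ 2 / (3 * (1 - s ^ 2)).
Proof.
  intro Hs. assert (Hu0 : 0 < 1 - s^2) by nra. assert (H := I3 s ltac:(lra)). unfold Tf.
  apply (Rmult_le_reg_r s). lra.
  replace ((-1 + artanh s / s) * s) with (artanh s - s) by (field; lra).
  replace (s ^ 2 / (3 * (1 - s ^ 2)) * s) with (s ^ 3 / (3 * (1 - s ^ 2))) by (field; sides). lra.
Qed.

Lemma Tf_up2 s : 0 < s < 1 -> Tf s <= artanh s / s.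
Proof. intro Hs. unfold Tf. lra. Qed.

Lemma Qp_bound s : 0 < s < 1 -> Rabs (Qp s) <= 3 * s / (1 - s ^ 2) ^ 2.
Proof.
  intro Hs. assert (Hu : 0 < 1 - s^2) by nra.
  assert (H1 := I1 s ltac:(lra)). assert (H2 := I2 s ltac:(lra)).
  assert (E : Qp s = 2 * s / (1 - s ^ 2) ^ 2 - (s - artanh s * (1 - s^2)) / (s^2 * (1 - s^2))).
  { unfold Qp. field. sides. }
  set (A := artanh s) in *. set (u := 1 - s^2) in *.
  assert (Ha : 0 <= (s - A * u) / (s^2 * u)).
  { apply Rdiv_le_0_compat. assert (0 <= s^3) by (apply pow_le; lra). lra. apply Rmult_lt_0_compat; [nra|lra]. }
  assert (Hb : (s - A * u) / (s^2 * u) <= s / u).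
  { apply (Rmult_le_reg_r (s^2 * u)). apply Rmult_lt_0_compat; [nra|lra].
    replace ((s - A * u) / (s ^ 2 * u) * (s ^ 2 * u)) with (s - A * u) by (field; sides).
    replace (s / u * (s ^ 2 * u)) with (s^3) by (field; sides).
    assert (A * u >= (s + s^3/3) * u) by (apply Rmult_ge_compat_r; lra).
    assert (Hx: (s + s^3/3) * u = s - s^3 + s^3/3 * u) by (unfold u; ring).
    assert (0 <= s^3/3 * u) by (apply Rmult_le_pos; [apply Rdiv_le_0_compat; [apply pow_le|]|]; lra).
    lra. }
  assert (Hc : s / u <= s / u ^ 2).
  { apply Rmult_le_compat_l; [lra|]. apply Rinv_le_contravar. nra. unfold u in *. nra. }
  assert (Hd : 0 <= 2 * s / u ^ 2) by (apply Rdiv_le_0_compat; nra).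
  rewrite E. apply Rabs_le. split.
  - replace (3 * s / u ^ 2) with (3 * (s / u^2)) by (field; sides).
    replace (2 * s / u ^ 2) with (2 * (s / u^2)) in * by (field; sides). lra.
  - replace (3 * s / u ^ 2) with (3 * (s / u^2)) by (field; sides).
    replace (2 * s / u ^ 2) with (2 * (s / u^2)) in * by (field; sides). lra.
Qed.

Lemma Tf_incr a b : 0 < a -> a < b -> b < 1 -> Tf a < Tf b.
Proof.
  intros Ha Hab Hb. apply (mono_lt Tf (fun s => Qf s / s)); auto.
  - intros t Ht. apply Tf_deriv. lra.
  - intros t Ht. apply Rdiv_lt_0_compat; [apply Qf_pos|]; lra.
Qed.

Lemma Tf_le a b : 0 < a -> a <= b -> b < 1 -> Tf a <= Tf b.
Proof.
  intros Ha Hab Hb. destruct (Req_dec a b) as [->|]; [lra|]. left; apply Tf_incr; lra.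
Qed.

Lemma Tf_cont s : 0 < s < 1 -> continuity_pt Tf s.
Proof. intro Hs. apply (deriv_cont Tf (fun s => Qf s / s)). apply Tf_deriv; auto. Qed.

Lemma Tf_surj t : 0 < t -> exists s, 0 < s < 1 /\ Tf s = t.
Proof.
  intro Ht.
  set (s1 := sqrt (t / (1 + t))).
  assert (Hs1sq : s1 ^ 2 = t / (1 + t)).
  { unfold s1. apply pow2_sqrt. apply Rdiv_le_0_compat; lra. }
  assert (Hs1p : 0 < s1) by (unfold s1; apply sqrt_lt_R0; apply Rdiv_lt_0_compat; lra).
  assert (Hs1b : s1 ^ 2 < 1).
  { rewrite Hs1sq. apply (Rmult_lt_reg_r (1 + t)); [lra|]. field_simplify; lra. }
  assert (Hs11 : s1 < 1) by nra.
  assert (HT1 : Tf s1 < t).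
  { apply Rle_lt_trans with (s1 ^ 2 / (3 * (1 - s1 ^ 2))). apply Tf_up; lra.
    rewrite Hs1sq. replace (t / (1 + t) / (3 * (1 - t / (1 + t)))) with (t / 3) by (field; lra). lra. }
  set (e := exp (2 * (t + 2))).
  assert (He : 1 < e) by (unfold e; rewrite <- exp_0; apply exp_increasing; lra).
  set (s2 := (e - 1) / (e + 1)).
  assert (Hs2 : 0 < s2 < 1).
  { unfold s2. split. apply Rdiv_lt_0_compat; lra.
    apply (Rmult_lt_reg_r (e + 1)); [lra|]. field_simplify; lra. }
  assert (HA2 : artanh s2 = t + 2).
  { unfold artanh. replace ((1 + s2) / (1 - s2)) with e by (unfold s2; field; lra).
    unfold e. rewrite ln_exp. field. }
  assert (HT2 : t < Tf s2).
  { unfold Tf. rewrite HA2. apply Rlt_le_trans with (-1 + (t + 2)). lra.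
    apply Rplus_le_compat_l. apply (Rmult_le_reg_r s2). lra.
    replace ((t + 2) / s2 * s2) with (t + 2) by (field; lra). nra. }
  assert (Hlt : s1 < s2).
  { destruct (Rlt_or_le s1 s2) as [|Hc]; auto.
    assert (Tf s2 <= Tf s1) by (apply Tf_le; lra). lra. }
  destruct (IVT_interv (fun s => Tf s - t) s1 s2) as [z [Hz Ez]].
  - intros a Ha. apply continuity_pt_minus. apply Tf_cont; lra. apply continuity_pt_const. intros x y; reflexivity.
  - exact Hlt.
  - lra.
  - lra.
  - exists z. split; lra.
Qed.

Lemma lam_spec_ex t : 0 < t -> lam_spec t (lam t).
Proof.
  intro Ht. destruct (Tf_surj t Ht) as [s [Hs Es]].
  assert (Hl : lam_spec t ((1 - s ^ 2) / 4)).
  { split. split. assert (s^2 < 1) by nra. lra. assert (0 < s^2) by nra. lra.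
    replace (1 - 4 * ((1 - s ^ 2) / 4)) with (s ^ 2) by field.
    rewrite sqrt_pow2 by lra. exact Es. }
  unfold lam. destruct (Rlt_dec 0 t) as [_|]; [|lra].
  apply (epsilon_spec (inhabits (/ 4)) (lam_spec t)). exists ((1 - s ^ 2) / 4). exact Hl.
Qed.

Definition Sg (t : R) : R := sqrt (1 - 4 * lam t).

Lemma Sg_prop t : 0 < t -> 0 < Sg t < 1 /\ Tf (Sg t) = t /\ lam t = (1 - Sg t ^ 2) / 4.
Proof.
  intro Ht. destruct (lam_spec_ex t Ht) as [[H1 H2] H3].
  assert (Hsq : Sg t ^ 2 = 1 - 4 * lam t) by (unfold Sg; apply pow2_sqrt; lra).
  split; [|split].
  - unfold Sg. split. apply sqrt_lt_R0; lra.
    apply Rlt_le_trans with (sqrt 1); [apply sqrt_lt_1; lra | rewrite sqrt_1; lra].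
  - exact H3.
  - lra.
Qed.

Lemma Sg_le t1 t2 : 0 < t1 -> t1 <= t2 -> Sg t1 <= Sg t2.
Proof.
  intros H1 H12. destruct (Sg_prop t1 H1) as [A1 [B1 _]]. destruct (Sg_prop t2 ltac:(lra)) as [A2 [B2 _]].
  destruct (Rle_or_lt (Sg t1) (Sg t2)) as [|Hc]; auto.
  assert (Tf (Sg t2) < Tf (Sg t1)) by (apply Tf_incr; lra).
  lra.
Qed.

Lemma Sg_deriv t : 0 < t -> is_derive Sg t (Sg t / Qf (Sg t)).
Proof.
  intro Ht.
  assert (Hlb : 0 < t / 2) by lra.
  destruct (Sg_prop (t/2) Hlb) as [Pa [Ta _]].
  destruct (Sg_prop (2*t) ltac:(lra)) as [Pb [Tb _]].
  destruct (Sg_prop t Ht) as [Pt [Tt _]].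
  assert (Hab : Sg (t/2) <= Sg t <= Sg (2 * t)) by (split; apply Sg_le; lra).
  assert (Hne : Sg (t / 2) < Sg (2 * t)).
  { destruct (Rle_or_lt (Sg (2*t)) (Sg (t/2))) as [Hc|]; auto.
    assert (Tf (Sg (2*t)) <= Tf (Sg (t/2))) by (apply Tf_le; lra). lra. }
  assert (Prf : forall a, Sg (t/2) <= a <= Sg (2*t) -> derivable_pt Tf a).
  { intros a Ha. apply ex_derive_Reals_0. exists (Qf a / a). apply Tf_deriv. lra. }
  assert (Hcont : continuity_pt Sg t).
  { apply (continuity_pt_recip_interv Tf Sg (Sg (t/2)) (Sg (2*t)) Hne).
    - intros x y Hx Hxy Hy. apply Tf_incr; lra.
    - intros x Hx1 Hx2. rewrite Ta in Hx1. rewrite Tb in Hx2. unfold comp, id.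
      apply Sg_prop. lra.
    - intros x Hx1 Hx2. rewrite Ta in Hx1. rewrite Tb in Hx2. split; apply Sg_le; lra.
    - intros a Ha. apply Tf_cont. lra.
    - rewrite Ta, Tb. lra. }
  assert (H := derivable_pt_lim_recip_interv Tf Sg (t/2) (2*t) t Prf Hcont ltac:(lra) ltac:(lra) Hab).
  rewrite Derive_Reals in H.
  rewrite (is_derive_unique Tf (Sg t) (Qf (Sg t) / Sg t)) in H by (apply Tf_deriv; lra).
  assert (HQ := Qf_pos (Sg t) Pt).
  replace (Sg t / Qf (Sg t)) with (1 / (Qf (Sg t) / Sg t)) by (field; lra).
  apply is_derive_Reals. apply H.
  - intros x Hx. unfold comp, id. apply Sg_prop. lra.
  - apply Rgt_not_eq. apply Rdiv_lt_0_compat; lra.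
Qed.

Lemma sAu_pos s : 0 < s < 1 -> 0 < s - artanh s * (1 - s ^ 2).
Proof. intro Hs. assert (H := I2 s ltac:(lra)). assert (0 < s^3) by (apply pow_lt; lra). lra. Qed.

Lemma loc_pos (t : R) (P : R -> Prop) : 0 < t -> (forall y, 0 < y -> P y) -> locally t P.
Proof.
  intros Ht H. exists (mkposreal t Ht). intros y Hy. apply H.
  change (Rabs (y - t) < t) in Hy. apply Rabs_lt_between in Hy. lra.
Qed.

Lemma DSg t : 0 < t -> Derive (fun x => Sg x) t = Sg t / Qf (Sg t).
Proof. intro Ht. apply is_derive_unique. apply Sg_deriv. exact Ht. Qed.

Lemma ExSg t : 0 < t -> ex_derive (fun x => Sg x) t.
Proof. intro Ht. exists (Sg t / Qf (Sg t)). apply Sg_deriv. exact Ht. Qed.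

Lemma ln_sq s : 0 < s -> ln (s * (s * 1)) = 2 * ln s.
Proof. intro Hs. rewrite Rmult_1_r, ln_mult by lra. ring. Qed.

Lemma f_th_deriv t : 0 < t -> is_derive f_th t (-2 * ln (Sg t)).
Proof.
  intro Ht.
  apply is_derive_ext_loc with (f := fun t => - ln ((1 - Sg t ^ 2) / 4) - 2 * t - t * ln (Sg t ^ 2)).
  { apply loc_pos; auto. intros y Hy. destruct (Sg_prop y Hy) as [_ [_ E]].
    unfold f_th. rewrite E. replace (1 - 4 * ((1 - Sg y ^ 2) / 4)) with (Sg y ^ 2) by field. reflexivity. }
  destruct (Sg_prop t Ht) as [Hs [Ts _]].
  assert (HQ := Qf_pos (Sg t) Hs).
  auto_derive.
  - split; [apply ExSg; auto|]. split. assert (Sg t * (Sg t * 1) < 1) by nra. lra.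
    split; [apply ExSg; auto|]. split; auto. nra.
  - rewrite DSg by auto. rewrite ln_sq by lra.
    set (s := Sg t) in *. rewrite <- Ts. unfold Tf, Qf in *.
    assert (HP := sAu_pos s Hs). assert (0 < 1 - s^2) by nra. field. sides.
Qed.

Definition F2 (s : R) : R := -2 / Qf s.
Definition F3 (s : R) : R := 2 * s * Qp s / Qf s ^ 3.
Definition Wf (s : R) : R := (1 - s ^ 2) * Qf s.
Definition Wp (s : R) : R := - (1 - s ^ 2) + 2 * s * artanh s / Qf s.
Definition Wpps (s : R) : R :=
  2 * s + (2 * artanh s + 2 * s / (1 - s ^ 2)) / Qf s - 2 * s * artanh s * Qp s / Qf s ^ 2.
Definition W2 (s : R) : R := Wpps s * (s / Qf s).
Definition J1 (s : R) : R := - Wp s / (2 * Wf s).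
Definition J2 (s : R) : R := - W2 s / (2 * Wf s) + Wp s ^ 2 / (2 * Wf s ^ 2).

Lemma DQf s : 0 < s < 1 -> Derive (fun x => Qf x) s = Qp s.
Proof. intro Hs. apply is_derive_unique. apply Qf_deriv. exact Hs. Qed.
Lemma ExQf s : 0 < s < 1 -> ex_derive (fun x => Qf x) s.
Proof. intro Hs. exists (Qp s). apply Qf_deriv. exact Hs. Qed.
Lemma DA s : 0 < s < 1 -> Derive (fun x => artanh x) s = / (1 - s ^ 2).
Proof. intro Hs. apply is_derive_unique. apply artanh_deriv. lra. Qed.
Lemma ExA s : 0 < s < 1 -> ex_derive (fun x => artanh x) s.
Proof. intro Hs. exists (/ (1 - s ^ 2)). apply artanh_deriv. lra. Qed.

Ltac exsides := repeat split; try (apply ExSg; auto); try (apply ExQf; auto); try (apply ExA; auto); try nz; try lra.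

Lemma D2 t : 0 < t -> is_derive (fun t => -2 * ln (Sg t)) t (F2 (Sg t)).
Proof.
  intro Ht. destruct (Sg_prop t Ht) as [Hs [Ts _]].
  assert (HQ := Qf_pos (Sg t) Hs).
  auto_derive.
  - exsides.
  - rewrite DSg by auto. unfold F2. field. sides.
Qed.

Lemma D3 t : 0 < t -> is_derive (fun t => F2 (Sg t)) t (F3 (Sg t)).
Proof.
  intro Ht. destruct (Sg_prop t Ht) as [Hs [Ts _]].
  assert (HQ := Qf_pos (Sg t) Hs). unfold F2.
  auto_derive.
  - exsides.
  - rewrite DSg, DQf by auto. unfold F3. field. sides.
Qed.

Lemma Wf_eq s : 0 < s < 1 -> 1 - (Tf s + 1) * (1 - s ^ 2) = Wf s.
Proof. intro Hs. unfold Wf, Tf, Qf. field. sides. Qed.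

Lemma Wf_pos s : 0 < s < 1 -> 0 < Wf s.
Proof. intro Hs. unfold Wf. assert (HQ := Qf_pos s Hs). apply Rmult_lt_0_compat; nra. Qed.

Lemma D4 t : 0 < t -> is_derive j_th t (J1 (Sg t)).
Proof.
  intro Ht.
  apply is_derive_ext_loc with (f := fun t => - / 2 * ln (1 - (t + 1) * (1 - Sg t ^ 2)) + / 2 * ln 2).
  { apply loc_pos; auto. intros y Hy. destruct (Sg_prop y Hy) as [_ [_ E]].
    unfold j_th. rewrite E. replace (1 - 4 * (y + 1) * ((1 - Sg y ^ 2) / 4)) with (1 - (y + 1) * (1 - Sg y ^ 2)) by field. reflexivity. }
  destruct (Sg_prop t Ht) as [Hs [Ts _]].
  assert (HQ := Qf_pos (Sg t) Hs). assert (HW := Wf_pos (Sg t) Hs). assert (HWe := Wf_eq (Sg t) Hs).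
  rewrite Ts in HWe.
  auto_derive.
  - split; [apply ExSg; auto|]. split; auto. simpl. rewrite Rmult_1_r. replace (Sg t * Sg t) with (Sg t ^ 2) by ring.
    lra.
  - rewrite DSg by auto.
    set (s := Sg t) in *. rewrite <- Ts. assert (HP := sAu_pos s Hs). assert (0 < 1 - s^2) by nra.
    unfold J1, Wp, Wf, Tf, Qf in *. field. sides.
Qed.

Lemma D5 t : 0 < t -> is_derive (fun t => J1 (Sg t)) t (J2 (Sg t)).
Proof.
  intro Ht. destruct (Sg_prop t Ht) as [Hs [Ts _]].
  assert (HQ := Qf_pos (Sg t) Hs). assert (HW := Wf_pos (Sg t) Hs).
  assert (Hu : 0 < 1 - Sg t ^ 2) by nra.
  unfold J1, Wp, Wf in *.
  auto_derive.
  - exsides.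
  - rewrite DSg, DQf, DA by auto.
    set (s := Sg t) in *. assert (HP := sAu_pos s Hs).
    unfold J2, W2, Wpps, Wp, Wf, Qp, Qf in *. field. sides.
Qed.

Lemma A_pows s : 0 <= s < 1 ->
  artanh s ^ 2 * (1 - s ^ 2) <= 65 /\ artanh s ^ 3 * (1 - s ^ 2) <= 65.
Proof.
  intro Hs. assert (H4 := I4 s Hs). assert (HA := artanh_nonneg s Hs).
  assert (Hu : 0 <= 1 - s^2) by nra. set (A := artanh s) in *. set (u := 1 - s^2) in *.
  assert (E2 : A ^ 2 <= 1 + A ^ 4) by nra.
  assert (E3 : A ^ 3 <= 1 + A ^ 4) by nra.
  assert (u <= 1) by (unfold u; nra).
  split.
  - apply Rle_trans with ((1 + A^4) * u). apply Rmult_le_compat_r; lra. nra.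
  - apply Rle_trans with ((1 + A^4) * u). apply Rmult_le_compat_r; lra. nra.
Qed.

Lemma iQ_bound s : 0 < s < 1 -> 0 < / Qf s <= 3 * (1 - s ^ 2) / (2 * s ^ 2).
Proof.
  intro Hs. assert (HQ := Qf_pos s Hs). assert (HL := Qf_low s Hs). assert (Hu : 0 < 1 - s^2) by nra.
  split. apply Rinv_0_lt_compat; auto.
  replace (3 * (1 - s ^ 2) / (2 * s ^ 2)) with (/ (2 / 3 * s ^ 2 / (1 - s ^ 2))) by (field; sides).
  apply Rinv_le_contravar; auto. apply Rdiv_lt_0_compat; nra.
Qed.

Lemma Au_le s : 0 <= s < 1 -> artanh s * (1 - s ^ 2) <= s.
Proof. intro Hs. assert (H := I2 s Hs). assert (0 <= s^3) by (apply pow_le; lra). lra. Qed.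

Lemma B1 s : 0 < s < 1 -> Tf s * Rabs (F2 s) <= 1.
Proof.
  intro Hs. destruct (iQ_bound s Hs) as [H1 H2]. assert (HT := Tf_up s Hs). assert (HT0 := Tf_low s Hs).
  assert (Hu : 0 < 1 - s^2) by nra.
  unfold F2. replace (-2 / Qf s) with (-(2 * / Qf s)) by (unfold Rdiv; ring).
  rewrite Rabs_Ropp, Rabs_right by lra.
  apply Rle_trans with (s ^ 2 / (3 * (1 - s ^ 2)) * (2 * (3 * (1 - s ^ 2) / (2 * s ^ 2)))).
  - apply Rmult_le_compat; try lra. assert (0 <= s^2/3) by nra. lra.
  - right. field. sides.
Qed.

Lemma mul2_le a b a' b' : 0 <= a <= a' -> 0 <= b <= b' -> a * b <= a' * b'.
Proof. intros [H1 H2] [H3 H4]. apply Rmult_le_compat; lra. Qed.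

Lemma F3_bound s : 0 < s < 1 -> Rabs (F3 s) <= 81 * (1 - s ^ 2) / (4 * s ^ 4).
Proof.
  intro Hs. destruct (iQ_bound s Hs) as [H1 H2]. assert (HQp := Qp_bound s Hs).
  assert (Hu : 0 < 1 - s^2) by nra.
  assert (E : F3 s = 2 * s * Qp s * (/ Qf s) ^ 3).
  { unfold F3. assert (HQ := Qf_pos s Hs). field. lra. }
  rewrite E. rewrite !Rabs_mult. rewrite (Rabs_right 2) by lra. rewrite (Rabs_right s) by lra.
  rewrite (Rabs_right ((/ Qf s) ^ 3)) by (apply Rle_ge, pow_le; lra).
  apply Rle_trans with (2 * s * (3 * s / (1 - s ^ 2) ^ 2) * (3 * (1 - s ^ 2) / (2 * s ^ 2)) ^ 3).
  - apply mul2_le. split. apply Rmult_le_pos; [lra|apply Rabs_pos].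
    apply Rmult_le_compat_l; lra.
    split. apply pow_le; lra. apply pow_incr; lra.
  - right. field. sides.
Qed.

Lemma B3 s : 0 < s < 1 -> Tf s ^ 2 * Rabs (F3 s) <= 100000.
Proof.
  intro Hs. assert (HF := F3_bound s Hs). assert (Hu : 0 < 1 - s^2) by nra.
  assert (HT0 := Tf_low s Hs). assert (HT1 := Tf_up s Hs). assert (HT2 := Tf_up2 s Hs).
  assert (HTp : 0 <= Tf s) by (assert (0 <= s^2/3) by nra; lra).
  assert (HR := Rabs_pos (F3 s)).
  destruct (Rle_or_lt (s ^ 2) (1/2)) as [Hc|Hc].
  - apply Rle_trans with ((s ^ 2 / (3 * (1 - s ^ 2))) ^ 2 * (81 * (1 - s ^ 2) / (4 * s ^ 4))).
    + apply mul2_le. split. apply pow_le; lra. apply pow_incr; lra. lra.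
    + replace ((s ^ 2 / (3 * (1 - s ^ 2))) ^ 2 * (81 * (1 - s ^ 2) / (4 * s ^ 4)))
        with (9 / 4 * / (1 - s^2)) by (field; sides).
      assert (/ (1 - s^2) <= 2). { replace 2 with (/ (1/2)) by field. apply Rinv_le_contravar; lra. }
      lra.
  - assert (Hs2 : 1/2 < s) by nra. destruct (A_pows s ltac:(lra)) as [HA2 _].
    assert (HA := artanh_nonneg s ltac:(lra)).
    apply Rle_trans with ((artanh s / s) ^ 2 * (81 * (1 - s ^ 2) / (4 * s ^ 4))).
    + apply mul2_le. split. apply pow_le; lra. apply pow_incr; lra. lra.
    + replace ((artanh s / s) ^ 2 * (81 * (1 - s ^ 2) / (4 * s ^ 4)))
        with (81 / 4 * (artanh s ^ 2 * (1 - s ^ 2)) * / s ^ 6) by (field; sides).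
      assert (/ s ^ 6 <= 64).
      { replace 64 with (/ ((1/2)^6)) by field. apply Rinv_le_contravar. apply pow_lt; lra. apply pow_incr; lra. }
      assert (0 <= artanh s ^ 2 * (1 - s ^ 2)) by (apply Rmult_le_pos; [apply pow_le|]; lra).
      assert (0 <= / s ^ 6) by (apply Rlt_le, Rinv_0_lt_compat, pow_lt; lra).
      apply Rle_trans with (81 / 4 * 65 * 64). apply mul2_le; split; lra. lra.
Qed.

Lemma Wp_bound s : 0 < s < 1 ->
  Rabs (Wp s) <= (1 - s ^ 2) + 3 * (artanh s * (1 - s ^ 2)) / s.
Proof.
  intro Hs. destruct (iQ_bound s Hs) as [H1 H2]. assert (Hu : 0 < 1 - s^2) by nra.
  assert (HA := artanh_nonneg s ltac:(lra)).
  assert (E : Wp s = - (1 - s ^ 2) + 2 * s * artanh s * / Qf s) by (unfold Wp; field; apply Rgt_not_eq, Qf_pos; auto).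
  rewrite E.
  assert (H3 : 0 <= 2 * s * artanh s * / Qf s) by (apply Rmult_le_pos; [|lra]; apply Rmult_le_pos; lra).
  assert (H4 : 2 * s * artanh s * / Qf s <= 2 * s * artanh s * (3 * (1 - s ^ 2) / (2 * s ^ 2))).
  { apply Rmult_le_compat_l; [apply Rmult_le_pos|]; lra. }
  replace (2 * s * artanh s * (3 * (1 - s ^ 2) / (2 * s ^ 2))) with (3 * (artanh s * (1 - s ^ 2)) / s) in H4 by (field; sides).
  apply Rabs_le. lra.
Qed.

Lemma Wpps_bound s : 0 < s < 1 ->
  Rabs (Wpps s) <= 2 * s + 3 * (artanh s * (1 - s ^ 2)) / s ^ 2 + 3 / s + 27 * artanh s / (2 * s ^ 2).
Proof.
  intro Hs. destruct (iQ_bound s Hs) as [H1 H2]. assert (Hu : 0 < 1 - s^2) by nra.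
  assert (HA := artanh_nonneg s ltac:(lra)). assert (HQp := Qp_bound s Hs).
  assert (E : Wpps s = 2 * s + (2 * artanh s + 2 * s / (1 - s ^ 2)) * / Qf s
                        - 2 * s * artanh s * Qp s * (/ Qf s) ^ 2)
    by (unfold Wpps; assert (HQ := Qf_pos s Hs); field; sides).
  rewrite E.
  assert (Hp : 0 <= 2 * artanh s + 2 * s / (1 - s ^ 2)).
  { assert (0 <= 2 * s / (1 - s^2)) by (apply Rdiv_le_0_compat; lra). lra. }
  assert (H3 : (2 * artanh s + 2 * s / (1 - s ^ 2)) * / Qf s <=
               (2 * artanh s + 2 * s / (1 - s ^ 2)) * (3 * (1 - s ^ 2) / (2 * s ^ 2))).
  { apply Rmult_le_compat_l; lra. }
  assert (H3' : 0 <= (2 * artanh s + 2 * s / (1 - s ^ 2)) * / Qf s) by (apply Rmult_le_pos; lra).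
  assert (H4 : Rabs (2 * s * artanh s * Qp s * (/ Qf s) ^ 2) <=
               2 * s * artanh s * (3 * s / (1 - s ^ 2) ^ 2) * (3 * (1 - s ^ 2) / (2 * s ^ 2)) ^ 2).
  { rewrite !Rabs_mult. rewrite (Rabs_right 2), (Rabs_right s), (Rabs_right (artanh s)), (Rabs_right ((/ Qf s) ^ 2)) by (try apply Rle_ge, pow_le; lra).
    apply mul2_le. split. apply Rmult_le_pos; [|apply Rabs_pos]. apply Rmult_le_pos; lra.
    apply Rmult_le_compat_l. apply Rmult_le_pos; lra. lra.
    split. apply pow_le; lra. apply pow_incr; lra. }
  replace ((2 * artanh s + 2 * s / (1 - s ^ 2)) * (3 * (1 - s ^ 2) / (2 * s ^ 2)))
    with (3 * (artanh s * (1 - s ^ 2)) / s ^ 2 + 3 / s) in H3 by (field; sides).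
  replace (2 * s * artanh s * (3 * s / (1 - s ^ 2) ^ 2) * (3 * (1 - s ^ 2) / (2 * s ^ 2)) ^ 2)
    with (27 * artanh s / (2 * s ^ 2)) in H4 by (field; sides).
  apply Rabs_le_between in H4. apply Rabs_le. lra.
Qed.

Lemma W2_bound s : 0 < s < 1 ->
  Rabs (W2 s) <= 3 * (1 - s ^ 2) + 9 * (artanh s * (1 - s ^ 2)) / (2 * s ^ 3)
                 + 9 * (1 - s ^ 2) / (2 * s ^ 2) + 81 * (artanh s * (1 - s ^ 2)) / (4 * s ^ 3).
Proof.
  intro Hs. destruct (iQ_bound s Hs) as [H1 H2]. assert (Hu : 0 < 1 - s^2) by nra.
  assert (HA := artanh_nonneg s ltac:(lra)). assert (HW := Wpps_bound s Hs).
  unfold W2. rewrite Rabs_mult. unfold Rdiv at 1. rewrite Rabs_mult, (Rabs_right s), (Rabs_right (/ Qf s)) by lra.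
  set (M := 2 * s + 3 * (artanh s * (1 - s ^ 2)) / s ^ 2 + 3 / s + 27 * artanh s / (2 * s ^ 2)) in *.
  apply Rle_trans with (M * (s * (3 * (1 - s ^ 2) / (2 * s ^ 2)))).
  - apply mul2_le. split; [apply Rabs_pos|lra]. split. apply Rmult_le_pos; lra. apply Rmult_le_compat_l; lra.
  - assert (Hau : 0 <= artanh s * (1 - s^2)) by (apply Rmult_le_pos; lra).
    assert (Hau2 : artanh s * (1 - s^2) * (1 - s^2) <= artanh s * (1 - s^2)).
    { assert (1 - s^2 <= 1) by nra. 
      replace (artanh s * (1 - s^2)) with (artanh s * (1 - s^2) * 1) at 2 by ring.
      apply Rmult_le_compat_l; lra. }
    unfold M.
    replace ((2 * s + 3 * (artanh s * (1 - s ^ 2)) / s ^ 2 + 3 / s + 27 * artanh s / (2 * s ^ 2)) *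
       (s * (3 * (1 - s ^ 2) / (2 * s ^ 2))))
     with (3 * (1 - s ^ 2) + 9 * (artanh s * (1 - s ^ 2) * (1 - s^2)) / (2 * s ^ 3)
                 + 9 * (1 - s ^ 2) / (2 * s ^ 2) + 81 * (artanh s * (1 - s ^ 2)) / (4 * s ^ 3)) by (field; sides).
    assert (9 * (artanh s * (1 - s ^ 2) * (1 - s^2)) / (2 * s ^ 3) <= 9 * (artanh s * (1 - s ^ 2)) / (2 * s ^ 3)).
    { unfold Rdiv. apply Rmult_le_compat_r. apply Rlt_le, Rinv_0_lt_compat. assert (0 < s^3) by (apply pow_lt; lra). lra. lra. }
    lra.
Qed.

Lemma iW_bound s : 0 < s < 1 -> 0 < / Wf s <= 3 / (2 * s ^ 2).
Proof.
  intro Hs. assert (HW := Wf_pos s Hs). assert (HL := Qf_low s Hs). assert (Hu : 0 < 1 - s^2) by nra.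
  split. apply Rinv_0_lt_compat; auto.
  replace (3 / (2 * s ^ 2)) with (/ (2 / 3 * s ^ 2)) by (field; sides).
  apply Rinv_le_contravar. nra. unfold Wf.
  replace (2 / 3 * s ^ 2) with ((1 - s^2) * (2 / 3 * s ^ 2 / (1 - s ^ 2))) by (field; sides).
  apply Rmult_le_compat_l; lra.
Qed.

Lemma mul3_le a b c a' b' c' : 0 <= a <= a' -> 0 <= b <= b' -> 0 <= c <= c' -> a * b * c <= a' * b' * c'.
Proof. intros. apply mul2_le; [|lra]. split. apply Rmult_le_pos; lra. apply mul2_le; lra. Qed.

Lemma J1_abs s : 0 < s < 1 -> Rabs (J1 s) = Rabs (Wp s) * / Wf s / 2.
Proof.
  intro Hs. assert (HW := Wf_pos s Hs). unfold J1.
  replace (- Wp s / (2 * Wf s)) with (- (Wp s * / Wf s / 2)) by (field; lra).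
  rewrite Rabs_Ropp. unfold Rdiv. rewrite !Rabs_mult. rewrite (Rabs_right (/ Wf s)), (Rabs_right (/2)) by (apply Rle_ge; apply Rlt_le, Rinv_0_lt_compat; lra).
  reflexivity.
Qed.

Lemma J2_abs s : 0 < s < 1 -> Rabs (J2 s) <= Rabs (W2 s) * / Wf s / 2 + Rabs (Wp s) ^ 2 * (/ Wf s) ^ 2 / 2.
Proof.
  intro Hs. assert (HW := Wf_pos s Hs). unfold J2.
  replace (- W2 s / (2 * Wf s) + Wp s ^ 2 / (2 * Wf s ^ 2)) with
    (- (W2 s * / Wf s / 2) + Wp s ^ 2 * (/ Wf s) ^ 2 / 2) by (field; lra).
  eapply Rle_trans. apply Rabs_triang. rewrite Rabs_Ropp.
  apply Rplus_le_compat.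
  - unfold Rdiv. rewrite !Rabs_mult. rewrite (Rabs_right (/ Wf s)), (Rabs_right (/2)) by (apply Rle_ge; apply Rlt_le, Rinv_0_lt_compat; lra). lra.
  - rewrite Rabs_right. rewrite pow2_abs. lra.
    apply Rle_ge. apply Rmult_le_pos. apply Rmult_le_pos. apply pow2_ge_0. apply pow_le. apply Rlt_le, Rinv_0_lt_compat; lra. lra.
Qed.

Lemma Tf_small s : 0 < s < 1 -> s ^ 2 <= 1/2 -> Tf s <= 2 * s ^ 2 / 3.
Proof.
  intros Hs Hc. assert (H := Tf_up s Hs). assert (Hu : 0 < 1 - s^2) by nra.
  apply Rle_trans with (s ^ 2 / (3 * (1 - s ^ 2))); auto.
  apply (Rmult_le_reg_r (3 * (1 - s ^ 2))). lra.
  replace (s ^ 2 / (3 * (1 - s ^ 2)) * (3 * (1 - s ^ 2))) with (s^2) by (field; sides).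
  assert (0 <= s^2) by nra. nra.
Qed.

Lemma Tf_big s : 0 < s < 1 -> 1/2 < s -> Tf s <= 2 * artanh s.
Proof.
  intros Hs Hc. assert (H := Tf_up2 s Hs). assert (HA := artanh_nonneg s ltac:(lra)).
  apply Rle_trans with (artanh s / s); auto.
  apply (Rmult_le_reg_r s). lra. replace (artanh s / s * s) with (artanh s) by (field; lra). nra.
Qed.

Lemma Tf_nonneg s : 0 < s < 1 -> 0 <= Tf s.
Proof. intro Hs. assert (H := Tf_low s Hs). assert (0 <= s^2/3) by nra. lra. Qed.

Lemma B2 s : 0 < s < 1 -> Tf s * Rabs (J1 s) <= 2000.
Proof.
  intro Hs. rewrite J1_abs by auto. destruct (iW_bound s Hs) as [H1 H2]. assert (HWp := Wp_bound s Hs).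
  assert (Hu : 0 < 1 - s^2) by nra. assert (HA := artanh_nonneg s ltac:(lra)).
  assert (HAu := Au_le s ltac:(lra)). assert (HT := Tf_nonneg s Hs). assert (Ha := Rabs_pos (Wp s)).
  assert (Hau : 0 <= artanh s * (1 - s^2)) by (apply Rmult_le_pos; lra).
  replace (Tf s * (Rabs (Wp s) * / Wf s / 2)) with (Tf s * Rabs (Wp s) * / Wf s / 2) by (unfold Rdiv; ring).
  destruct (Rle_or_lt (s ^ 2) (1/2)) as [Hc|Hc].
  - assert (HT2 := Tf_small s Hs Hc).
    assert (Ha4 : Rabs (Wp s) <= 4).
    { assert (3 * (artanh s * (1 - s ^ 2)) / s <= 3).
      { apply (Rmult_le_reg_r s). lra. replace (3 * (artanh s * (1 - s ^ 2)) / s * s) with (3 * (artanh s * (1 - s ^ 2))) by (field; lra). lra. }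
      lra. }
    assert (Tf s * Rabs (Wp s) * / Wf s <= 2 * s ^ 2 / 3 * 4 * (3 / (2 * s ^ 2))) by (apply mul3_le; lra).
    replace (2 * s ^ 2 / 3 * 4 * (3 / (2 * s ^ 2))) with 4 in H by (field; lra).
    lra.
  - assert (Hs2 : 1/2 < s) by nra. assert (HT2 := Tf_big s Hs Hs2).
    destruct (A_pows s ltac:(lra)) as [HA2 _].
    assert (Ha6 : Rabs (Wp s) <= (1 - s^2) + 6 * (artanh s * (1 - s^2))).
    { assert (3 * (artanh s * (1 - s ^ 2)) / s <= 6 * (artanh s * (1 - s^2))).
      { apply (Rmult_le_reg_r s). lra. replace (3 * (artanh s * (1 - s ^ 2)) / s * s) with (3 * (artanh s * (1 - s ^ 2))) by (field; lra). nra. }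
      lra. }
    assert (Hiw : / Wf s <= 3).
    { apply Rle_trans with (3 / (2 * s ^ 2)); auto. apply (Rmult_le_reg_r (2 * s^2)). nra.
      replace (3 / (2 * s ^ 2) * (2 * s ^ 2)) with 3 by (field; lra). nra. }
    assert (Tf s * Rabs (Wp s) * / Wf s <= 2 * artanh s * ((1 - s^2) + 6 * (artanh s * (1 - s^2))) * 3).
    { apply mul3_le; try lra. }
    assert (E : 2 * artanh s * ((1 - s^2) + 6 * (artanh s * (1 - s^2))) * 3 = 6 * (artanh s * (1 - s^2)) + 36 * (artanh s ^ 2 * (1 - s^2))) by ring.
    lra.
Qed.

Lemma B4 s : 0 < s < 1 -> Tf s ^ 2 * Rabs (J2 s) <= 1000000.
Proof.
  intro Hs. assert (HJ := J2_abs s Hs). destruct (iW_bound s Hs) as [H1 H2].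
  assert (HWp := Wp_bound s Hs). assert (HW2 := W2_bound s Hs).
  assert (Hu : 0 < 1 - s^2) by nra. assert (Hu1 : 1 - s^2 <= 1) by nra. assert (HA := artanh_nonneg s ltac:(lra)).
  assert (HAu := Au_le s ltac:(lra)). assert (HT := Tf_nonneg s Hs).
  assert (Ha := Rabs_pos (Wp s)). assert (Hb := Rabs_pos (W2 s)).
  assert (Hau : 0 <= artanh s * (1 - s^2)) by (apply Rmult_le_pos; lra).
  assert (HT2p : 0 <= Tf s ^ 2) by (apply pow_le; lra).
  apply Rle_trans with (Tf s ^ 2 * (Rabs (W2 s) * / Wf s / 2 + Rabs (Wp s) ^ 2 * (/ Wf s) ^ 2 / 2)).
  { apply Rmult_le_compat_l; auto. }
  replace (Tf s ^ 2 * (Rabs (W2 s) * / Wf s / 2 + Rabs (Wp s) ^ 2 * (/ Wf s) ^ 2 / 2))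
    with ((Tf s ^ 2 * Rabs (W2 s) * / Wf s + Tf s ^ 2 * Rabs (Wp s) ^ 2 * (/ Wf s) ^ 2) / 2) by (unfold Rdiv; ring).
  assert (Hs3 : 0 < s ^ 3) by (apply pow_lt; lra). assert (Hs2p : 0 < s ^ 2) by (apply pow_lt; lra).
  destruct (Rle_or_lt (s ^ 2) (1/2)) as [Hc|Hc].
  - assert (HT2 := Tf_small s Hs Hc).
    assert (Ha4 : Rabs (Wp s) <= 4).
    { assert (3 * (artanh s * (1 - s ^ 2)) / s <= 3).
      { apply (Rmult_le_reg_r s). lra. replace (3 * (artanh s * (1 - s ^ 2)) / s * s) with (3 * (artanh s * (1 - s ^ 2))) by (field; lra). lra. }
      lra. }
    assert (Hb33 : Rabs (W2 s) <= 33 / s ^ 2).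
    { assert (E1 : 3 * (1 - s^2) <= 3 / s^2).
      { apply Rle_trans with 3. lra. apply (Rmult_le_reg_r (s^2)). lra. replace (3 / s ^ 2 * s ^ 2) with 3 by (field; lra). nra. }
      assert (E2 : 9 * (artanh s * (1 - s ^ 2)) / (2 * s ^ 3) <= 9 / 2 / s ^ 2).
      { apply (Rmult_le_reg_r (2 * s ^ 3)). lra.
        replace (9 * (artanh s * (1 - s ^ 2)) / (2 * s ^ 3) * (2 * s ^ 3)) with (9 * (artanh s * (1 - s ^ 2))) by (field; lra).
        replace (9 / 2 / s ^ 2 * (2 * s ^ 3)) with (9 * s) by (field; lra). lra. }
      assert (E3 : 9 * (1 - s ^ 2) / (2 * s ^ 2) <= 9 / 2 / s ^ 2).
      { apply (Rmult_le_reg_r (2 * s ^ 2)). lra.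
        replace (9 * (1 - s ^ 2) / (2 * s ^ 2) * (2 * s ^ 2)) with (9 * (1 - s ^ 2)) by (field; lra).
        replace (9 / 2 / s ^ 2 * (2 * s ^ 2)) with 9 by (field; lra). lra. }
      assert (E4 : 81 * (artanh s * (1 - s ^ 2)) / (4 * s ^ 3) <= 81 / 4 / s ^ 2).
      { apply (Rmult_le_reg_r (4 * s ^ 3)). lra.
        replace (81 * (artanh s * (1 - s ^ 2)) / (4 * s ^ 3) * (4 * s ^ 3)) with (81 * (artanh s * (1 - s ^ 2))) by (field; lra).
        replace (81 / 4 / s ^ 2 * (4 * s ^ 3)) with (81 * s) by (field; lra). lra. }
      assert (E5 : 3 / s ^ 2 + 9 / 2 / s ^ 2 + 9 / 2 / s ^ 2 + 81 / 4 / s ^ 2 <= 33 / s ^ 2).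
      { apply (Rmult_le_reg_r (s ^ 2)). lra. field_simplify; lra. }
      lra. }
    assert (F1 : Tf s ^ 2 * Rabs (W2 s) * / Wf s <= (2 * s ^ 2 / 3) ^ 2 * (33 / s ^ 2) * (3 / (2 * s ^ 2))).
    { apply mul3_le; try lra. split; auto. apply pow_incr; lra. }
    assert (F2 : Tf s ^ 2 * Rabs (Wp s) ^ 2 * (/ Wf s) ^ 2 <= (2 * s ^ 2 / 3) ^ 2 * 4 ^ 2 * (3 / (2 * s ^ 2)) ^ 2).
    { apply mul3_le. split; auto. apply pow_incr; lra. split. apply pow_le; lra. apply pow_incr; lra.
      split. apply pow_le; lra. apply pow_incr; lra. }
    replace ((2 * s ^ 2 / 3) ^ 2 * (33 / s ^ 2) * (3 / (2 * s ^ 2))) with 22 in F1 by (field; lra).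
    replace ((2 * s ^ 2 / 3) ^ 2 * 4 ^ 2 * (3 / (2 * s ^ 2)) ^ 2) with 16 in F2 by (field; lra).
    lra.
  - assert (Hs2 : 1/2 < s) by nra. assert (HT2 := Tf_big s Hs Hs2).
    destruct (A_pows s ltac:(lra)) as [HA2 HA3]. assert (HA4 := I4 s ltac:(lra)).
    assert (Ha6 : Rabs (Wp s) <= (1 - s^2) + 6 * (artanh s * (1 - s^2))).
    { assert (3 * (artanh s * (1 - s ^ 2)) / s <= 6 * (artanh s * (1 - s^2))).
      { apply (Rmult_le_reg_r s). lra. replace (3 * (artanh s * (1 - s ^ 2)) / s * s) with (3 * (artanh s * (1 - s ^ 2))) by (field; lra). nra. }
      lra. }
    assert (Hiw : / Wf s <= 3).
    { apply Rle_trans with (3 / (2 * s ^ 2)); auto. apply (Rmult_le_reg_r (2 * s^2)). nra.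
      replace (3 / (2 * s ^ 2) * (2 * s ^ 2)) with 3 by (field; lra). nra. }
    assert (Hs3b : / s ^ 3 <= 8).
    { replace 8 with (/ ((1/2)^3)) by field. apply Rinv_le_contravar. apply pow_lt; lra. apply pow_incr; lra. }
    assert (Hs2b : / s ^ 2 <= 2).
    { replace 2 with (/ (1/2)) by field. apply Rinv_le_contravar; lra. }
    assert (Hb2 : Rabs (W2 s) <= 12 * (1 - s^2) + 198 * (artanh s * (1 - s^2))).
    { assert (E2 : 9 * (artanh s * (1 - s ^ 2)) / (2 * s ^ 3) <= 36 * (artanh s * (1 - s ^ 2))).
      { replace (9 * (artanh s * (1 - s ^ 2)) / (2 * s ^ 3)) with (9 / 2 * (artanh s * (1 - s ^ 2)) * / s ^ 3) by (field; lra).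
        replace (36 * (artanh s * (1 - s ^ 2))) with (9 / 2 * (artanh s * (1 - s ^ 2)) * 8) by field.
        apply Rmult_le_compat_l; [lra|auto]. }
      assert (E3 : 9 * (1 - s ^ 2) / (2 * s ^ 2) <= 9 * (1 - s ^ 2)).
      { replace (9 * (1 - s ^ 2) / (2 * s ^ 2)) with (9 / 2 * (1 - s ^ 2) * / s ^ 2) by (field; lra).
        replace (9 * (1 - s ^ 2)) with (9 / 2 * (1 - s ^ 2) * 2) by field.
        apply Rmult_le_compat_l; [lra|auto]. }
      assert (E4 : 81 * (artanh s * (1 - s ^ 2)) / (4 * s ^ 3) <= 162 * (artanh s * (1 - s ^ 2))).
      { replace (81 * (artanh s * (1 - s ^ 2)) / (4 * s ^ 3)) with (81 / 4 * (artanh s * (1 - s ^ 2)) * / s ^ 3) by (field; lra).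
        replace (162 * (artanh s * (1 - s ^ 2))) with (81 / 4 * (artanh s * (1 - s ^ 2)) * 8) by field.
        apply Rmult_le_compat_l; [lra|auto]. }
      lra. }
    assert (F1 : Tf s ^ 2 * Rabs (W2 s) * / Wf s <= (2 * artanh s) ^ 2 * (12 * (1 - s^2) + 198 * (artanh s * (1 - s^2))) * 3).
    { apply mul3_le; try lra. split; auto. apply pow_incr; lra. }
    assert (F2 : Tf s ^ 2 * Rabs (Wp s) ^ 2 * (/ Wf s) ^ 2 <= (2 * artanh s) ^ 2 * ((1 - s^2) + 6 * (artanh s * (1 - s^2))) ^ 2 * 3 ^ 2).
    { apply mul3_le. split; auto. apply pow_incr; lra. split. apply pow_le; lra. apply pow_incr; lra.
      split. apply pow_le; lra. apply pow_incr; lra. }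
    set (A := artanh s) in *. set (u := 1 - s ^ 2) in *.
    assert (G1 : (2 * A) ^ 2 * (12 * u + 198 * (A * u)) * 3 = 144 * (A ^ 2 * u) + 2376 * (A ^ 3 * u)) by ring.
    assert (G2 : (2 * A) ^ 2 * (u + 6 * (A * u)) ^ 2 * 3 ^ 2 = 36 * (A ^ 2 * u * u) + 432 * (A ^ 3 * u * u) + 1296 * (A ^ 4 * u * u)) by ring.
    assert (G3 : A ^ 2 * u * u <= A ^ 2 * u) by (assert (0 <= A^2 * u) by (apply Rmult_le_pos; [apply pow_le|]; lra); nra).
    assert (G4 : A ^ 3 * u * u <= A ^ 3 * u) by (assert (0 <= A^3 * u) by (apply Rmult_le_pos; [apply pow_le|]; lra); nra).
    assert (G5 : A ^ 4 * u * u <= A ^ 4 * u) by (assert (0 <= A^4 * u) by (apply Rmult_le_pos; [apply pow_le|]; lra); nra).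
    lra.
Qed.

Lemma taylor2 (f f1 f2 : R -> R) a b M : a <= b ->
  (forall t, a <= t <= b -> is_derive f t (f1 t)) ->
  (forall t, a <= t <= b -> is_derive f1 t (f2 t)) ->
  (forall t, a <= t <= b -> Rabs (f2 t) <= M) ->
  Rabs (f a - f b + (b - a) * f1 b) <= M * (b - a) ^ 2.
Proof.
  intros Hab D1 D2 B.
  assert (S1 : forall t, a <= t <= b -> Rabs (f1 t - f1 b) <= M * (b - a)).
  { intros t Ht. rewrite Rabs_minus_sym.
    assert (H := lip f1 f2 t b M ltac:(lra) ltac:(intros; apply D2; lra) ltac:(intros; apply B; lra)).
    assert (0 <= M) by (apply Rle_trans with (Rabs (f2 t)); [apply Rabs_pos|apply B; lra]).
    apply Rle_trans with (M * (b - t)); auto. apply Rmult_le_compat_l; lra. }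
  assert (H := lip (fun t => f t - t * f1 b) (fun t => f1 t - f1 b) a b (M * (b - a)) Hab).
  cbv beta in H.
  replace (f a - f b + (b - a) * f1 b) with (- (f b - b * f1 b - (f a - a * f1 b))) by ring.
  rewrite Rabs_Ropp. replace (M * (b - a) ^ 2) with (M * (b - a) * (b - a)) by ring.
  apply H.
  - intros t Ht. assert (Hd := D1 t Ht). auto_derive.
    + exact (ex_intro _ (f1 t) Hd).
    + replace (Derive (fun x => f x) t) with (f1 t) by (symmetry; apply is_derive_unique; exact Hd). ring.
  - exact S1.
Qed.

Lemma taylor3 (f f1 f2 f3 : R -> R) a b M : a <= b ->
  (forall t, a <= t <= b -> is_derive f t (f1 t)) ->
  (forall t, a <= t <= b -> is_derive f1 t (f2 t)) ->
  (forall t, a <= t <= b -> is_derive f2 t (f3 t)) ->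
  (forall t, a <= t <= b -> Rabs (f3 t) <= M) ->
  Rabs (f a - f b + (b - a) * f1 b - (b - a) ^ 2 / 2 * f2 b) <= M * (b - a) ^ 3.
Proof.
  intros Hab D1 D2 D3 B.
  assert (HM : 0 <= M) by (apply Rle_trans with (Rabs (f3 a)); [apply Rabs_pos|apply B; lra]).
  assert (S1 : forall t, a <= t <= b -> Rabs (f2 t - f2 b) <= M * (b - a)).
  { intros t Ht. rewrite Rabs_minus_sym.
    assert (H := lip f2 f3 t b M ltac:(lra) ltac:(intros; apply D3; lra) ltac:(intros; apply B; lra)).
    apply Rle_trans with (M * (b - t)); auto. apply Rmult_le_compat_l; lra. }
  assert (S2 : forall t, a <= t <= b -> Rabs (f1 t - f1 b + (b - t) * f2 b) <= M * (b - a) ^ 2).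
  { intros t Ht.
    assert (H := lip (fun t => f1 t - t * f2 b) (fun t => f2 t - f2 b) t b (M * (b - a)) ltac:(lra)).
    cbv beta in H.
    replace (f1 t - f1 b + (b - t) * f2 b) with (- (f1 b - b * f2 b - (f1 t - t * f2 b))) by ring.
    rewrite Rabs_Ropp. apply Rle_trans with (M * (b - a) * (b - t)).
    apply H.
    - intros u Hu. assert (Hd := D2 u ltac:(lra)). auto_derive.
      + exact (ex_intro _ (f2 u) Hd).
      + replace (Derive (fun x => f1 x) u) with (f2 u) by (symmetry; apply is_derive_unique; exact Hd). ring.
    - intros u Hu. apply S1. lra.
    - replace (M * (b - a) ^ 2) with (M * (b - a) * (b - a)) by ring.
      apply Rmult_le_compat_l. apply Rmult_le_pos; lra. lra. }
  assert (H := lip (fun t => f t - t * f1 b - (t - b) ^ 2 / 2 * f2 b)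
                   (fun t => f1 t - f1 b + (b - t) * f2 b) a b (M * (b - a) ^ 2) Hab).
  cbv beta in H.
  replace (f a - f b + (b - a) * f1 b - (b - a) ^ 2 / 2 * f2 b) with
    (- (f b - b * f1 b - (b - b) ^ 2 / 2 * f2 b - (f a - a * f1 b - (a - b) ^ 2 / 2 * f2 b))) by field.
  rewrite Rabs_Ropp. replace (M * (b - a) ^ 3) with (M * (b - a) ^ 2 * (b - a)) by ring.
  apply H.
  - intros t Ht. assert (Hd := D1 t Ht). auto_derive.
    + exact (ex_intro _ (f1 t) Hd).
    + replace (Derive (fun x => f x) t) with (f1 t) by (symmetry; apply is_derive_unique; exact Hd). field.
  - exact S2.
Qed.

Lemma exp_quad z Z : Rabs z <= Z -> Rabs (exp z - 1 - z) <= exp Z * z ^ 2.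
Proof.
  intro Hz. destruct (Rle_or_lt z 0) as [Hn|Hp].
  - assert (H := taylor2 exp exp exp z 0 1 Hn).
    rewrite exp_0 in H.
    replace (exp z - 1 - z) with (exp z - 1 + (0 - z) * 1) by ring.
    apply Rle_trans with (1 * (0 - z) ^ 2).
    + apply H.
      * intros t _. apply is_derive_Reals, derivable_pt_lim_exp.
      * intros t _. apply is_derive_Reals, derivable_pt_lim_exp.
      * intros t Ht. rewrite Rabs_right by (apply Rle_ge, Rlt_le, exp_pos). rewrite <- exp_0. 
        destruct (Req_dec t 0) as [->|]; [lra|]. left; apply exp_increasing; lra.
    + replace ((0 - z) ^ 2) with (z ^ 2) by ring. apply Rmult_le_compat_r. apply pow2_ge_0.
      rewrite <- exp_0. assert (0 <= Z) by (apply Rle_trans with (Rabs z); [apply Rabs_pos|auto]).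
      destruct (Req_dec Z 0) as [->|]; [lra|]. left; apply exp_increasing; lra.
  - assert (HZ : z <= Z) by (rewrite Rabs_right in Hz; lra).
    assert (H := lip (fun t => exp t - 1 - t) (fun t => exp t - 1) 0 z (exp z * z) ltac:(lra)).
    cbv beta in H. rewrite exp_0 in H.
    replace (exp z - 1 - z) with (exp z - 1 - z - (1 - 1 - 0)) by ring.
    apply Rle_trans with (exp z * z * (z - 0)).
    + apply H.
      * intros t _. auto_derive; auto. ring.
      * intros t Ht. assert (H2 := lip exp exp 0 t (exp z) ltac:(lra)).
        rewrite exp_0 in H2.
        apply Rle_trans with (exp z * (t - 0)).
        apply H2. intros u _. apply is_derive_Reals, derivable_pt_lim_exp.
        intros u Hu. rewrite Rabs_right by (apply Rle_ge, Rlt_le, exp_pos).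
        destruct (Req_dec u z) as [->|]; [lra|]. left; apply exp_increasing; lra.
        apply Rmult_le_compat_l. apply Rlt_le, exp_pos. lra.
    + replace (exp z * z * (z - 0)) with (exp z * z ^ 2) by ring.
      apply Rmult_le_compat_r. apply pow2_ge_0.
      destruct (Req_dec z Z) as [->|]; [lra|]. left; apply exp_increasing; lra.
Qed.

Lemma ln1m_bound y : 0 <= y <= 1/2 -> Rabs (ln (1 - y) + y + y ^ 2 / 2) <= 2 * y ^ 3.
Proof.
  intro Hy.
  assert (H := lip (fun t => ln (1 - t) + t + t ^ 2 / 2) (fun t => - (t ^ 2 / (1 - t))) 0 y (2 * y ^ 2) ltac:(lra)).
  cbv beta in H. replace (1 - 0) with 1 in H by ring. rewrite ln_1 in H.
  replace (ln (1 - y) + y + y ^ 2 / 2) with (ln (1 - y) + y + y ^ 2 / 2 - (0 + 0 + 0 ^ 2 / 2)) by (simpl; field).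
  replace (2 * y ^ 3) with (2 * y ^ 2 * (y - 0)) by ring.
  apply H.
  - intros t Ht. auto_derive. lra. field. lra.
  - intros t Ht. rewrite Rabs_Ropp. rewrite Rabs_right.
    + apply (Rmult_le_reg_r (1 - t)). lra. replace (t ^ 2 / (1 - t) * (1 - t)) with (t^2) by (field; lra).
      assert (t^2 <= y^2) by (apply pow_incr; lra). assert (0 <= t^2) by nra. nra.
    + apply Rle_ge, Rdiv_le_0_compat. nra. lra.
Qed.

Lemma LS_bound G : 2 <= G -> Rabs (1 + (G - / 2) * ln (1 - / G)) <= 3 / G ^ 2.
Proof.
  intro HG. set (y := / G).
  assert (Hy : 0 <= y <= 1/2).
  { unfold y. split. apply Rlt_le, Rinv_0_lt_compat; lra. replace (1/2) with (/2) by field. apply Rinv_le_contravar; lra. }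
  assert (H := ln1m_bound y Hy). set (R0 := ln (1 - y) + y + y ^ 2 / 2) in *.
  assert (E : 1 + (G - / 2) * ln (1 - y) = / (4 * G ^ 2) + (G - / 2) * R0).
  { unfold R0, y. field. lra. }
  rewrite E. eapply Rle_trans. apply Rabs_triang.
  rewrite Rabs_right by (apply Rle_ge, Rlt_le, Rinv_0_lt_compat; nra).
  rewrite Rabs_mult, (Rabs_right (G - / 2)) by lra.
  assert (H2 : (G - / 2) * Rabs R0 <= G * (2 * y ^ 3)).
  { apply mul2_le. split; lra. split; [apply Rabs_pos|auto]. }
  replace (G * (2 * y ^ 3)) with (2 / G ^ 2) in H2 by (unfold y; field; lra).
  assert (/ (4 * G ^ 2) <= 1 / G ^ 2).
  { unfold Rdiv. rewrite Rmult_1_l. apply Rinv_le_contravar; nra. }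
  replace (3 / G ^ 2) with (1 / G^2 + 2 / G^2) by (field; lra). lra.
Qed.

Lemma th_bounds t : 0 < t ->
  t * Rabs (F2 (Sg t)) <= 1 /\ t * Rabs (J1 (Sg t)) <= 2000 /\
  t ^ 2 * Rabs (F3 (Sg t)) <= 100000 /\ t ^ 2 * Rabs (J2 (Sg t)) <= 1000000 /\
  Sg t ^ 2 <= 3 * t /\ 0 < Sg t < 1.
Proof.
  intro Ht. destruct (Sg_prop t Ht) as [Hs [Ts _]].
  assert (H1 := B1 (Sg t) Hs). assert (H2 := B2 (Sg t) Hs). assert (H3 := B3 (Sg t) Hs).
  assert (H4 := B4 (Sg t) Hs). assert (H := Tf_low (Sg t) Hs). rewrite Ts in H1, H2, H3, H4, H.
  repeat split; auto; lra.
Qed.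

Lemma Dvals t : 0 < t -> Derive f_th t = -2 * ln (Sg t) /\
  Derive (Derive f_th) t = F2 (Sg t) /\ Derive j_th t = J1 (Sg t).
Proof.
  intro Ht. split; [|split].
  - apply is_derive_unique. apply f_th_deriv; auto.
  - rewrite (Derive_ext_loc (Derive f_th) (fun y => -2 * ln (Sg y))).
    + apply is_derive_unique. apply D2; auto.
    + apply loc_pos; auto. intros y Hy. apply is_derive_unique. apply f_th_deriv; auto.
  - apply is_derive_unique. apply D4; auto.
Qed.

Definition Kr : R := 4400003.
Definition Zc : R := 2001 + Kr.
Definition Kc : R := exp Zc * (2 * 2001 ^ 2 + 2 * Kr ^ 2) + Kr.

Lemma Kc_pos : 0 < Kc.
Proof. unfold Kc, Kr. assert (0 < exp Zc) by apply exp_pos. assert (0 <= 2 * 2001 ^ 2 + 2 * 4400003 ^ 2) by nra. nra. Qed.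

Lemma core N G : 0 < N -> 2 <= G ->
  let th := G / N in let th' := (G - 1) / N in
  Rabs (exp ((1 + (G - / 2) * ln (1 - / G)) + N * (f_th th' - f_th th) + (j_th th' - j_th th))
        - exp (- Derive f_th th)
        - exp (- Derive f_th th) / N * (Derive (Derive f_th) th / 2 - Derive j_th th))
  <= Kc * (Sg th ^ 2 / G ^ 2).
Proof.
  intros HN HG th th'.
  assert (Hth : 0 < th) by (unfold th; apply Rdiv_lt_0_compat; lra).
  assert (Hth' : 0 < th') by (unfold th'; apply Rdiv_lt_0_compat; lra).
  assert (Hth2 : th / 2 <= th') by (unfold th, th'; apply (Rmult_le_reg_r N); [lra|]; field_simplify; lra).
  assert (Hh : th - th' = / N) by (unfold th, th'; field; lra).
  assert (Hle : th' <= th) by (assert (0 < / N) by (apply Rinv_0_lt_compat; lra); lra).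
  destruct (Dvals th Hth) as [E1 [E2 E3]]. rewrite E1, E2, E3.
  destruct (th_bounds th Hth) as [b1 [b2 [_ [_ [b5 b6]]]]].
  set (s := Sg th) in *.
  assert (Tayf := taylor3 f_th (fun t => -2 * ln (Sg t)) (fun t => F2 (Sg t)) (fun t => F3 (Sg t)) th' th (400000 / th ^ 2) Hle).
  assert (Tayj := taylor2 j_th (fun t => J1 (Sg t)) (fun t => J2 (Sg t)) th' th (4000000 / th ^ 2) Hle).
  cbv beta in Tayf, Tayj. fold s in Tayf, Tayj.
  assert (Hbt : forall t, th' <= t <= th -> / t ^ 2 <= 4 / th ^ 2).
  { intros t Ht. replace (4 / th ^ 2) with (/ ((th / 2) ^ 2)) by (field; lra).
    apply Rinv_le_contravar. apply pow_lt; lra. apply pow_incr; lra. }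
  assert (Rf : Rabs (f_th th' - f_th th + (th - th') * (-2 * ln s) - (th - th') ^ 2 / 2 * F2 s) <= 400000 / th ^ 2 * (th - th') ^ 3).
  { apply Tayf.
    - intros t Ht. apply f_th_deriv. lra.
    - intros t Ht. apply D2. lra.
    - intros t Ht. apply D3. lra.
    - intros t Ht. destruct (th_bounds t ltac:(lra)) as [_ [_ [c3 _]]].
      assert (Ht2 : 0 < t ^ 2) by (apply pow_lt; lra).
      apply Rle_trans with (100000 * / t ^ 2).
      + apply (Rmult_le_reg_l (t ^ 2)); auto. replace (t ^ 2 * (100000 * / t ^ 2)) with 100000 by (field; lra). lra.
      + replace (400000 / th ^ 2) with (100000 * (4 / th ^ 2)) by (field; lra). apply Rmult_le_compat_l; [lra|]. apply Hbt; auto. }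
  assert (Rj : Rabs (j_th th' - j_th th + (th - th') * J1 s) <= 4000000 / th ^ 2 * (th - th') ^ 2).
  { apply Tayj.
    - intros t Ht. apply D4. lra.
    - intros t Ht. apply D5. lra.
    - intros t Ht. destruct (th_bounds t ltac:(lra)) as [_ [_ [_ [c4 _]]]].
      assert (Ht2 : 0 < t ^ 2) by (apply pow_lt; lra).
      apply Rle_trans with (1000000 * / t ^ 2).
      + apply (Rmult_le_reg_l (t ^ 2)); auto. replace (t ^ 2 * (1000000 * / t ^ 2)) with 1000000 by (field; lra). lra.
      + replace (4000000 / th ^ 2) with (1000000 * (4 / th ^ 2)) by (field; lra). apply Rmult_le_compat_l; [lra|]. apply Hbt; auto. }
  clear Tayf Tayj Hbt.
  rewrite Hh in Rf, Rj.
  assert (HGth : th * N = G) by (unfold th; field; lra).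
  replace (400000 / th ^ 2 * (/ N) ^ 3) with (400000 / G ^ 2 / N) in Rf by (rewrite <- HGth; field; split; lra).
  replace (4000000 / th ^ 2 * (/ N) ^ 2) with (4000000 / G ^ 2) in Rj by (rewrite <- HGth; field; split; lra).
  set (Rfv := f_th th' - f_th th + / N * (-2 * ln s) - (/ N) ^ 2 / 2 * F2 s) in *.
  set (Rjv := j_th th' - j_th th + / N * J1 s) in *.
  set (LS := 1 + (G - / 2) * ln (1 - / G)).
  assert (HLS : Rabs LS <= 3 / G ^ 2) by (apply LS_bound; auto).
  set (a := F2 s / 2 - J1 s).
  set (r := LS + N * Rfv + Rjv).
  assert (Ex : LS + N * (f_th th' - f_th th) + (j_th th' - j_th th) = - (-2 * ln s) + (a / N + r)).
  { unfold r, Rfv, Rjv, a. field. lra. }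
  rewrite Ex. rewrite exp_plus.
  set (e0 := exp (- (-2 * ln s))).
  assert (He0 : e0 = s ^ 2).
  { unfold e0. replace (- (-2 * ln s)) with (ln s + ln s) by ring. rewrite exp_plus, exp_ln by lra. ring. }
  replace (e0 * exp (a / N + r) - e0 - e0 / N * a) with (e0 * (exp (a / N + r) - 1 - a / N)) by (field; lra).
  rewrite Rabs_mult, He0, Rabs_right by (apply Rle_ge, pow2_ge_0).
  replace (Kc * (s ^ 2 / G ^ 2)) with (s ^ 2 * (Kc * / G ^ 2)) by (field; lra).
  apply Rmult_le_compat_l; [apply pow2_ge_0|].
  assert (HG2 : 0 < G ^ 2) by nra.
  assert (Hr : Rabs r <= Kr / G ^ 2).
  { unfold r. eapply Rle_trans. apply Rabs_triang. eapply Rle_trans. apply Rplus_le_compat_r. apply Rabs_triang.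
    rewrite Rabs_mult, (Rabs_right N) by lra.
    assert (N * Rabs Rfv <= 400000 / G ^ 2).
    { apply (Rmult_le_reg_r (/ N)). apply Rinv_0_lt_compat; lra.
      replace (N * Rabs Rfv * / N) with (Rabs Rfv) by (field; lra). exact Rf. }
    replace (Kr / G ^ 2) with (3 / G ^ 2 + 400000 / G ^ 2 + 4000000 / G ^ 2) by (unfold Kr; field; lra).
    lra. }
  assert (Ha : Rabs (a / N) <= 2001 / G).
  { unfold a. unfold Rdiv at 1. rewrite Rabs_mult, (Rabs_right (/ N)) by (apply Rle_ge, Rlt_le, Rinv_0_lt_compat; lra).
    assert (Rabs (F2 s / 2 - J1 s) <= 2001 / th).
    { eapply Rle_trans. apply Rabs_triang. rewrite Rabs_Ropp. unfold Rdiv at 1. rewrite Rabs_mult.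
      rewrite (Rabs_right (/2)) by lra.
      apply (Rmult_le_reg_l th); auto.
      replace (th * (2001 / th)) with 2001 by (field; lra). nra. }
    apply Rle_trans with (2001 / th * / N).
    apply Rmult_le_compat_r; [apply Rlt_le, Rinv_0_lt_compat; lra|auto].
    right. rewrite <- HGth. field. lra. }
  assert (HG1 : / G <= 1) by (replace 1 with (/1) by field; apply Rinv_le_contravar; lra).
  assert (HG21 : / G ^ 2 <= 1) by (replace 1 with (/1) by field; apply Rinv_le_contravar; nra).
  assert (HKr : 0 < Kr) by (unfold Kr; lra).
  assert (Hz : Rabs (a / N + r) <= Zc).
  { eapply Rle_trans. apply Rabs_triang. unfold Zc.
    assert (2001 / G <= 2001) by (unfold Rdiv; nra). assert (Kr / G ^ 2 <= Kr) by (unfold Rdiv; nra). lra. }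
  assert (Hq := exp_quad (a / N + r) Zc Hz).
  assert (Hz2 : (a / N + r) ^ 2 <= (2 * 2001 ^ 2 + 2 * Kr ^ 2) / G ^ 2).
  { assert (S1 : (a / N) ^ 2 <= 2001 ^ 2 / G ^ 2).
    { rewrite <- pow2_abs. replace (2001 ^ 2 / G ^ 2) with ((2001 / G) ^ 2) by (field; lra).
      apply pow_incr. split; [apply Rabs_pos|auto]. }
    assert (S2 : r ^ 2 <= Kr ^ 2 / G ^ 2).
    { rewrite <- pow2_abs. apply Rle_trans with ((Kr / G ^ 2) ^ 2).
      apply pow_incr. split; [apply Rabs_pos|auto].
      replace ((Kr / G ^ 2) ^ 2) with (Kr ^ 2 / G ^ 2 * / G ^ 2) by (field; lra).
      replace (Kr ^ 2 / G ^ 2) with (Kr ^ 2 / G ^ 2 * 1) at 2 by ring.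
      apply Rmult_le_compat_l; auto. apply Rdiv_le_0_compat; nra. }
    assert ((a / N + r) ^ 2 <= 2 * (a / N) ^ 2 + 2 * r ^ 2) by (assert (Hxy := pow2_ge_0 (a / N - r)); nra).
    replace ((2 * 2001 ^ 2 + 2 * Kr ^ 2) / G ^ 2) with (2 * (2001 ^ 2 / G ^ 2) + 2 * (Kr ^ 2 / G ^ 2)) by (field; lra).
    lra. }
  replace (exp (a / N + r) - 1 - a / N) with ((exp (a / N + r) - 1 - (a / N + r)) + r) by ring.
  eapply Rle_trans. apply Rabs_triang.
  unfold Kc. replace ((exp Zc * (2 * 2001 ^ 2 + 2 * Kr ^ 2) + Kr) * / G ^ 2) with
    (exp Zc * ((2 * 2001 ^ 2 + 2 * Kr ^ 2) / G ^ 2) + Kr / G ^ 2) by (field; lra).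
  apply Rplus_le_compat; auto.
  eapply Rle_trans. apply Hq. apply Rmult_le_compat_l; auto. apply Rlt_le, exp_pos.
Qed.

Lemma beta_eq n k : (1 <= n)%nat ->
  let N := INR n in let G := INR (S (S k)) in
  beta n (S (S k)) = exp ((1 + (G - / 2) * ln (1 - / G)) + N * (f_th ((G - 1) / N) - f_th (G / N))
                          + (j_th ((G - 1) / N) - j_th (G / N))).
Proof.
  intros Hn N G.
  assert (HN : 0 < N) by (unfold N; apply lt_0_INR; lia).
  assert (HG' : INR (S k) = G - 1) by (unfold G; rewrite (S_INR (S k)); ring).
  assert (HGp : 0 < INR (S k)) by (apply lt_0_INR; lia).
  assert (HG : 0 < G) by lra.
  unfold beta. replace (S (S k) - 1)%nat with (S k) by lia.
  unfold Omega. fold G. rewrite HG'.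
  set (G' := G - 1) in *.
  assert (Hf : INR (Factorial.fact (S (S k))) = G * INR (Factorial.fact (S k))).
  { change (Factorial.fact (S (S k))) with (S (S k) * Factorial.fact (S k))%nat. rewrite mult_INR. reflexivity. }
  rewrite Hf.
  replace (2 * S (S k) - 2)%nat with (2 + (2 * S k - 2))%nat by lia. rewrite pow_add.
  assert (HpG : G ^ S (S k) = G * G ^ S k) by reflexivity. rewrite HpG.
  assert (Hexp : exp G = exp G' * exp 1) by (rewrite <- exp_plus; f_equal; unfold G'; ring).
  rewrite Hexp.
  set (rho := 1 - / G).
  assert (Hrho : rho = G' / G) by (unfold rho, G'; field; lra).
  assert (Hrp : 0 < rho) by (rewrite Hrho; apply Rdiv_lt_0_compat; lra).
  replace (1 + (G - / 2) * ln rho + N * (f_th (G' / N) - f_th (G / N)) + (j_th (G' / N) - j_th (G / N)))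
    with (1 + INR (S k) * ln rho + / 2 * ln rho + (N * f_th (G' / N) + j_th (G' / N)) + - (N * f_th (G / N) + j_th (G / N)))
    by (rewrite HG'; unfold G'; field).
  rewrite !exp_plus, exp_Ropp.
  replace (exp (INR (S k) * ln rho)) with (Rpower rho (INR (S k))) by reflexivity.
  replace (exp (/ 2 * ln rho)) with (Rpower rho (/ 2)) by reflexivity.
  rewrite Rpower_pow, Rpower_sqrt by auto.
  rewrite Hrho. rewrite sqrt_div_alt by lra.
  assert (Hpw : (G' / G) ^ S k = G' ^ S k / G ^ S k) by (unfold Rdiv; rewrite Rpow_mult_distr, pow_inv; reflexivity).
  rewrite Hpw, exp_plus. fold N.
  assert (0 < sqrt G) by (apply sqrt_lt_R0; lra).
  assert (0 < sqrt (2 * PI)) by (apply sqrt_lt_R0; assert (HPI := PI_RGT_0); lra).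
  assert (0 < INR (Factorial.fact (S k))) by (apply INR_fact_lt_0).
  assert (0 < G ^ S k) by (apply pow_lt; lra).
  assert (0 < N ^ (2 * S k - 2)) by (apply pow_lt; lra).
  assert (0 < exp G') by apply exp_pos. assert (0 < exp 1) by apply exp_pos.
  assert (0 < exp (N * f_th (G / N) + j_th (G / N))) by apply exp_pos.
  assert (0 < G' ^ S k) by (apply pow_lt; lra).
  field. repeat split; try (apply Rgt_not_eq; apply exp_pos); lra.
Qed.

Lemma Rpow43 x : 1 <= x -> Rpower x (- (4 / 3)) = Rpower x (2 / 3) / x ^ 2 /\
  Rpower x (- (2 / 3)) = / Rpower x (2 / 3) /\ 1 <= Rpower x (2 / 3).
Proof.
  intro Hx. split; [|split].
  - replace (- (4 / 3)) with (2 / 3 + - INR 2) by (simpl; field).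
    rewrite Rpower_plus, Rpower_Ropp, Rpower_pow by lra. reflexivity.
  - apply Rpower_Ropp.
  - rewrite <- (Rpower_O x) by lra. apply Rle_Rpower; lra.
Qed.

Lemma xbound N G s2 : 1 <= N -> 1 <= G -> 0 <= s2 <= 1 -> s2 <= 3 * (G / N) ->
  Rpower (N + G) (- (2 / 3)) <= G / N -> s2 / G ^ 2 <= 12 * Rpower (N + G) (- (4 / 3)).
Proof.
  intros HN HG Hs1 Hs2 Hth.
  destruct (Rpow43 (N + G) ltac:(lra)) as [E1 [E2 HP]].
  rewrite E1. rewrite E2 in Hth. set (P := Rpower (N + G) (2 / 3)) in *. set (x := N + G) in *.
  assert (Hx : 0 < x) by (unfold x; lra).
  assert (Hx2 : 0 < x ^ 2) by (apply pow_lt; lra).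
  destruct (Rle_or_lt G N) as [Hc|Hc].
  -
    assert (H1 : s2 / G ^ 2 <= 3 / (N ^ 2 * (G / N))).
    { apply Rle_trans with (3 * (G / N) / G ^ 2). unfold Rdiv at 1 2. apply Rmult_le_compat_r.
      apply Rlt_le, Rinv_0_lt_compat; nra. exact Hs2. right. field. lra. }
    assert (H2 : / (G / N) <= P).
    { replace P with (/ / P) by (field; lra). apply Rinv_le_contravar; auto. apply Rinv_0_lt_compat; lra. }
    assert (H3 : / N ^ 2 <= 4 / x ^ 2).
    { replace (4 / x ^ 2) with (/ ((x / 2) ^ 2)) by (field; lra). apply Rinv_le_contravar.
      apply pow_lt; lra. apply pow_incr. unfold x. lra. }
    apply Rle_trans with (3 / (N ^ 2 * (G / N))); auto.
    replace (3 / (N ^ 2 * (G / N))) with (3 * (/ N ^ 2 * / (G / N))) by (field; lra).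
    replace (12 * (P / x ^ 2)) with (3 * (4 / x ^ 2 * P)) by (field; lra).
    apply Rmult_le_compat_l; [lra|]. apply mul2_le.
    split; [apply Rlt_le, Rinv_0_lt_compat; nra|auto]. split; [apply Rlt_le, Rinv_0_lt_compat, Rdiv_lt_0_compat; lra|auto].
  - assert (H1 : s2 / G ^ 2 <= / G ^ 2).
    { unfold Rdiv. replace (/ G ^ 2) with (1 * / G ^ 2) at 2 by ring. apply Rmult_le_compat_r.
      apply Rlt_le, Rinv_0_lt_compat; nra. lra. }
    assert (H3 : / G ^ 2 <= 4 / x ^ 2).
    { replace (4 / x ^ 2) with (/ ((x / 2) ^ 2)) by (field; lra). apply Rinv_le_contravar.
      apply pow_lt; lra. apply pow_incr. unfold x. lra. }
    assert (4 / x ^ 2 <= 12 * (P / x ^ 2)).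
    { unfold Rdiv. assert (0 < / x^2) by (apply Rinv_0_lt_compat; lra). nra. }
    lra.
Qed.

Lemma g1_n2 n : (2 <= n)%nat -> Rpower (INR (n + 1)) (- (2 / 3)) <= INR 1 / INR n -> n = 2%nat.
Proof.
  intros Hn H. destruct (Nat.eq_dec n 2) as [|Hne]; auto. exfalso.
  assert (Hn3 : 3 <= INR n) by (replace 3 with (INR 3) by (simpl; ring); apply le_INR; lia).
  rewrite plus_INR in H. simpl INR in H at 2.
  destruct (Rpow43 (INR n + 1) ltac:(lra)) as [_ [E2 HP]]. rewrite E2 in H.
  set (P := Rpower (INR n + 1) (2 / 3)) in *.
  assert (HPn : INR n <= P).
  { apply (Rmult_le_reg_r (/ P)). apply Rinv_0_lt_compat; lra.
    replace (P * / P) with 1 by (field; lra).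
    apply (Rmult_le_reg_l (/ INR n)). apply Rinv_0_lt_compat; lra.
    replace (/ INR n * (INR n * / P)) with (/ P) by (field; lra). replace (INR 1 / INR n) with (/ INR n * 1) in H by (simpl; field; lra). lra. }
  assert (HP3 : P ^ 3 = (INR n + 1) ^ 2).
  { unfold P. rewrite <- Rpower_pow by (apply exp_pos). rewrite Rpower_mult.
    replace (2 / 3 * INR 3) with (INR 2) by (simpl; field). apply Rpower_pow. lra. }
  assert (INR n ^ 3 <= P ^ 3) by (apply pow_incr; lra).
  nra.
Qed.

Definition E0 : R :=
  let theta := INR 1 / INR 2 in
  Rabs (beta 2 1 - exp (- Derive f_th theta)
            - exp (- Derive f_th theta) / INR 2
              * (Derive (Derive f_th) theta / 2 - Derive j_th theta)).

Definition R3 : R := Rpower (INR (2 + 1)) (- (4 / 3)).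

Theorem lemma5 :
  exists C : R, 0 < C /\
    forall n g : nat, (2 <= n)%nat -> (1 <= g)%nat ->
      let theta := INR g / INR n in
      let x := INR (n + g) in
      Rpower x (- (2 / 3)) <= theta ->
      Rabs (beta n g - exp (- Derive f_th theta)
            - exp (- Derive f_th theta) / INR n
              * (Derive (Derive f_th) theta / 2 - Derive j_th theta))
      <= C * Rpower x (- (4 / 3)).
Proof.
  assert (HR3 : 0 < R3) by (unfold R3, Rpower; apply exp_pos).
  assert (HE0 : 0 <= E0) by (unfold E0; apply Rabs_pos).
  assert (HK := Kc_pos).
  exists (12 * Kc + E0 / R3). split.
  { assert (0 <= E0 / R3) by (apply Rdiv_le_0_compat; lra). lra. }
  intros n g Hn Hg theta x Hth.
  assert (HX : 0 < Rpower x (- (4 / 3))) by (unfold Rpower; apply exp_pos).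
  destruct g as [|[|k]]; [lia| |].
  - assert (n = 2%nat) by (apply g1_n2; auto). subst n.
    change (E0 <= (12 * Kc + E0 / R3) * R3).
    replace ((12 * Kc + E0 / R3) * R3) with (12 * Kc * R3 + E0) by (field; lra).
    assert (0 <= 12 * Kc * R3) by nra. lra.
  - unfold theta, x in *. clear theta x.
    rewrite (beta_eq n k) by lia.
    set (N := INR n) in *. set (G := INR (S (S k))) in *.
    assert (HN : 2 <= N) by (unfold N; replace 2 with (INR 2) by (simpl; ring); apply le_INR; lia).
    assert (HG : 2 <= G) by (unfold G; replace 2 with (INR 2) by (simpl; ring); apply le_INR; lia).
    rewrite plus_INR in Hth |- *. fold N G in Hth |- *.
    assert (Hc := core N G ltac:(lra) HG). cbv zeta in Hc.
    eapply Rle_trans. apply Hc.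
    assert (Hth0 : 0 < G / N) by (apply Rdiv_lt_0_compat; lra).
    destruct (th_bounds (G / N) Hth0) as [_ [_ [_ [_ [b5 b6]]]]].
    assert (Hs01 : 0 <= Sg (G / N) ^ 2 <= 1).
    { destruct b6 as [b61 b62]. split. apply pow2_ge_0. simpl. rewrite Rmult_1_r.
      replace 1 with (1 * 1) by ring. apply Rmult_le_compat; lra. }
    assert (Hx := xbound N G (Sg (G / N) ^ 2) ltac:(lra) ltac:(lra) Hs01 b5 Hth).
    assert (0 <= E0 / R3 * Rpower (N + G) (- (4 / 3))) by (apply Rmult_le_pos; [apply Rdiv_le_0_compat; lra|unfold Rpower; apply Rlt_le, exp_pos]).
    assert (0 < Rpower (N + G) (- (4 / 3))) by (unfold Rpower; apply exp_pos).
    apply Rle_trans with (Kc * (12 * Rpower (N + G) (- (4 / 3)))).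
    + apply Rmult_le_compat_l; lra.
    + nra.
Qed.
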